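(* Let $k\ge1$, $m_1,\dots,m_k\ge1$ integers with at least one $m_i\neq1$, and $\varepsilon_1,\dots,\varepsilon_k\in\{-1,1\}$. Then $\mathcal S(\underbrace{0,\dots,0}_{m_1-1},\varepsilon_1,\underbrace{0,\dots,0}_{m_2-1},\varepsilon_2,\dots,\underbrace{0,\dots,0}_{m_k-1},\varepsilon_k,1)=0.$
   Context: Let $V=\mathbb Q^\times\otimes_{\mathbb Z}\mathbb Q$ (torsion, in particular $-1$, becomes $0$); for $f\in\mathbb Q^\times$ write $f$ for its image in $V$. Tensors in $V^{\otimes n}$ are multilinear in the multiplicative sense, and any formal tensor having the number $0$ as a factor is interpreted as $0$. Define $\mu(x,y)=1-y/x$ if $x\ne0$, $\mu(0,y)=y$. For a tuple $(a_1,\dots,a_m)$, $m\ge2$ (the decorated polygon $P(a_1,\dots,a_m)$ with root decoration $a_m$, attached to $G(a_{m-1},\dots,a_1;a_m)$), define $\mathcal S(a_1,\dots,a_m)\in V^{\otimes(m-1)}$ by $\mathcal S(a_1,a_2)=\mu(a_1,a_2)$ and, for $m\ge3$, $\mathcal S(a_1,\dots,a_m)=\sum_{i=1}^{m-1}\mathcal S(a_1,\dots,\widehat{a_i},\dots,a_m)\otimes\mu(a_i,a_{i+1})-\sum_{i=2}^{m-1}\mathcal S(a_1,\dots,\widehat{a_i},\dots,a_m)\otimes\mu(a_i,a_{i-1})$. *)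

(* Defs.v *)
From HB Require Import structures.
From mathcomp Require Import all_boot all_order all_algebra.
Set Implicit Arguments. Unset Strict Implicit. Unset Printing Implicit Defensive.
Import Order.TTheory GRing.Theory Num.Theory.
Local Open Scope ring_scope.

Definition mu (x y : rat) : rat := if x == 0 then y else 1 - y / x.

(* A formal tensor in V^{(x) n}, V = Q^x (x)_Z Q: a finite Z-linear combination
   of pure tensors f_1 (x) ... (x) f_n with f_i in Q (a factor 0 makes the pure
   tensor 0, by the stated convention). *)
Definition ftensor := seq (int * seq rat).

Definition tappend (t : ftensor) (f : rat) : ftensor :=
  [seq (x.1, rcons x.2 f) | x <- t].
Definition topp (t : ftensor) : ftensor := [seq (- x.1, x.2) | x <- t].

Definition drop_at (i : nat) (a : seq rat) : seq rat := take i a ++ drop i.+1 a.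

Fixpoint S_aux (n : nat) (a : seq rat) : ftensor :=
  match n with
  | 0 => [:: (1%:Z, [:: mu a`_0 a`_1])]
  | n'.+1 =>
      flatten [seq tappend (S_aux n' (drop_at i a)) (mu a`_i a`_i.+1)
              | i <- iota 0 (size a).-1]
      ++ topp (flatten [seq tappend (S_aux n' (drop_at i a)) (mu a`_i a`_i.-1)
              | i <- iota 1 (size a).-2])
  end.

Definition S (a : seq rat) : ftensor := S_aux (size a - 2) a.

(* p-adic valuation on Q^x (the image of f in V = Q^x (x) Q is determined by its
   valuations at all primes; -1 maps to 0).  Value at 0 is irrelevant-set to 0,
   matching the convention that a pure tensor with a factor 0 is 0. *)
Definition vp (p : nat) (q : rat) : rat :=
  if q == 0 then 0
  else ((logn p `|numq q|%N)%:Z - (logn p `|denq q|%N)%:Z)%:~R.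

(* Coordinate of a tensor in V^{(x) n} on the basis vector p_1 (x) ... (x) p_n
   (V has Q-basis the primes). *)
Definition tcoord (t : ftensor) (ps : seq nat) : rat :=
  \sum_(x <- t)
     (x.1)%:~R * (if size x.2 == size ps
                  then \prod_(pf <- zip ps x.2) vp pf.1 pf.2 else 0).

Definition tensor_zero (n : nat) (t : ftensor) : Prop :=
  forall ps : seq nat, size ps = n -> all prime ps -> tcoord t ps = 0.

Definition zeta_word (ms : seq nat) (es : seq rat) : seq rat :=
  flatten [seq rcons (nseq (me.1 - 1) 0) me.2 | me <- zip ms es] ++ [:: 1].

(* Main.v *)
Require Import Defs.
From mathcomp Require Import all_boot all_order all_algebra.
From mathcomp Require Import zify.
Import GRing.Theory Num.Theory.
Local Open Scope ring_scope.

Definition good (f : rat) : bool := (f == 0) || (f == 1) || (f == -1).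

Lemma nth_good (a : seq rat) i : all good a -> good a`_i.
Proof.
move=> /allP H; case: (ltnP i (size a)) => Hi.
  by apply: H; apply: mem_nth.
by rewrite nth_default // /good eqxx.
Qed.

Lemma mu_good x y : good y -> (x == 0) || (y == 0) -> good (mu x y).
Proof.
rewrite /mu => gy /orP [/eqP->|/eqP->]; first by rewrite eqxx.
by case: ifP => // _; rewrite mul0r subr0 /good eqxx orbT.
Qed.

Lemma mu_good0 x y : good y -> x == 0 -> good (mu x y).
Proof. by move=> gy h; apply: mu_good => //; rewrite h. Qed.

Lemma drop_at_size (a : seq rat) i : (i < size a)%N -> size (drop_at i a) = (size a).-1.
Proof.
move=> Hi; rewrite /drop_at size_cat size_take size_drop Hi.
by move: Hi; case: (size a) => // n Hi; rewrite subSS subnKC.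
Qed.

Lemma drop_at_all (a : seq rat) i : all good a -> all good (drop_at i a).
Proof.
rewrite /drop_at => H; rewrite all_cat; apply/andP; split.
  by rewrite -(cat_take_drop i a) all_cat in H; case/andP: H.
by rewrite -(cat_take_drop i.+1 a) all_cat in H; case/andP: H.
Qed.

Lemma drop_at_mem0 (a : seq rat) i : (i < size a)%N -> a`_i != 0 -> 0 \in a ->
  0 \in drop_at i a.
Proof.
move=> Hi Hn H0; rewrite /drop_at mem_cat.
rewrite -(cat_take_drop i a) (drop_nth 0 Hi) mem_cat in_cons in H0.
by rewrite eq_sym (negbTE Hn) /= in H0.
Qed.

Lemma key n : forall a : seq rat, size a = n.+2 -> all good a -> 0 \in a ->
  all (fun x => has good x.2) (S_aux n a).
Proof.
elim: n => [|n IH] a Hs Hg H0 /=.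
  rewrite andbT orbF; apply: mu_good; first exact: nth_good.
  case: a Hs H0 {Hg} => [|x [|y [|]]] //= _.
  by rewrite !in_cons in_nil orbF => /orP [/eqP<-|/eqP<-]; rewrite eqxx ?orbT.
have side : forall i f, (i < size a)%N -> ((a`_i == 0) -> good f) ->
    all (fun x => has good x.2) (tappend (S_aux n (drop_at i a)) f).
  move=> i f Hi Hf; rewrite /tappend all_map; apply/allP => x Hx /=.
  rewrite has_rcons; case E: (a`_i == 0); first by rewrite Hf.
  apply/orP; right.
  have := IH (drop_at i a); rewrite drop_at_size // Hs => /(_ erefl).
  move=> /(_ (@drop_at_all a i Hg) (@drop_at_mem0 a i Hi (negbT E) H0)) /allP.
  by apply.
rewrite all_cat; apply/andP; split.
  apply/allP => x /flattenP [s /mapP [i Hi ->]] Hx.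
  move: Hi; rewrite mem_iota add0n => /andP [_ Hi].
  have Hi' : (i < size a)%N by move: Hi; rewrite Hs /=; lia.
  by move: x Hx; apply/allP; apply: side => // Hz; apply: mu_good0 => //; apply: nth_good.
rewrite /topp all_map; apply/allP => x /flattenP [s /mapP [i Hi ->]] Hx /=.
move: Hi; rewrite mem_iota => /andP [_ Hi].
have Hi' : (i < size a)%N by move: Hi; rewrite Hs /=; lia.
by move: x Hx; apply/allP; apply: side => // Hz; apply: mu_good0 => //; apply: nth_good.
Qed.

Lemma vp_good p f : good f -> vp p f = 0.
Proof.
rewrite /vp /good => /orP [/orP [/eqP->|/eqP->]|/eqP->] //.
  by rewrite /= logn1.
by rewrite /= logn1.
Qed.

Lemma zip_has (s : seq nat) (t : seq rat) : size s = size t -> has good t ->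
  has (fun pf => vp pf.1 pf.2 == 0) (zip s t).
Proof.
elim: t s => [|y t IH] [|x s] //= [Hs] /orP [Hy|Ht].
  by rewrite vp_good.
by rewrite IH ?orbT.
Qed.

Lemma zw_good (ms : seq nat) (es : seq rat) :
  all (fun e => (e == 1) || (e == -1)) es ->
  all good (flatten [seq rcons (nseq (me.1 - 1) 0) me.2 | me <- zip ms es]).
Proof.
elim: ms es => [|m ms IH] [|e es] //= /andP [He Hes].
rewrite all_cat IH // andbT all_rcons; apply/andP; split.
  by rewrite /good; case/orP: He => ->; rewrite ?orbT.
by apply/allP => z /nseqP [-> _]; rewrite /good eqxx.
Qed.

Lemma zw_zero (ms : seq nat) (es : seq rat) : size ms = size es ->
  all (fun m => 1 <= m)%N ms -> has (fun m => m != 1%N) ms ->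
  0 \in flatten [seq rcons (nseq (me.1 - 1) 0) me.2 | me <- zip ms es].
Proof.
elim: ms es => [|m ms IH] [|e es] //= [Hs] /andP [Hm Hms] /orP [Hm1|Hh];
  rewrite mem_cat; last by rewrite IH ?orbT.
apply/orP; left; rewrite mem_rcons in_cons; apply/orP; right.
have : (0 < m - 1)%N by move: Hm Hm1; case: m => [|[|]].
by case: (m - 1)%N => //= n _; rewrite in_cons eqxx.
Qed.

Theorem mainTheorem7 (k : nat) (ms : seq nat) (es : seq rat) :
  (1 <= k)%N -> size ms = k -> size es = k ->
  all (fun m => 1 <= m)%N ms -> has (fun m => m != 1%N) ms ->
  all (fun e => (e == 1) || (e == -1)) es ->
  tensor_zero (size (zeta_word ms es)).-1 (S (zeta_word ms es)).
Proof.
move=> _ Hms Hes Hm Hh He ps _ _.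
have H0 := @zw_zero ms es (etrans Hms (esym Hes)) Hm Hh.
have Hg := @zw_good ms es He.
set f := flatten _ in H0 Hg.
have Hw : zeta_word ms es = f ++ [:: 1] by [].
have Hsz : size (zeta_word ms es) = (size (zeta_word ms es) - 2).+2.
  have Hf : (0 < size f)%N.
    by rewrite lt0n size_eq0; apply/eqP => E; rewrite E in H0.
  rewrite Hw size_cat /=; move: Hf; case: (size f) => // j _; by rewrite addn1 subn2.
have := @key _ _ Hsz; rewrite Hw all_cat Hg /= => /(_ erefl).
rewrite mem_cat H0 => /(_ erefl) /allP Hall.
rewrite /tcoord /S big1_seq // => x /andP [_ Hx].
case: ifP => [/eqP Hs|]; last by rewrite mulr0.
apply/eqP; rewrite mulf_eq0; apply/orP; right.
by rewrite prodf_seq_eq0; apply: zip_has => //; apply: Hall.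
Qed.
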